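(* Let $q\ge 4$. Every twisted cubic of $\mathrm{PG}(U_1)$ that is contained in $\mathcal O_1$ is of the form $\theta(L)$ for some $q$-order subline $L$ of $\mathrm{PG}(1,q^3)$.
   Context: $q$ is a prime power. Let $U_1\subset\mathbb F_{q^3}^8$ be the set of vectors $(a,b^{q^2},b^{q},c,b,c^{q},c^{q^2},d)$ with $a,d\in\mathbb F_q$, $b,c\in\mathbb F_{q^3}$; it is an $8$-dimensional $\mathbb F_q$-vector space, so $\mathrm{PG}(U_1)\cong\mathrm{PG}(7,q)$. For $(a,b,c,d)\ne 0$ let $P(a,b,c,d)$ be the point of $\mathrm{PG}(U_1)$ spanned by this vector. Let $\mathcal O_1=\{P(1,t,t^{q^2+q},t^{q^2+q+1}) : t\in\mathbb F_{q^3}\}\cup\{P(0,0,0,1)\}$. Let $\theta:\mathrm{PG}(1,q^3)\to\mathcal O_1$ be the bijection $\langle(1,t)\rangle\mapsto P(1,t,t^{q^2+q},t^{q^2+q+1})$, $\langle(0,1)\rangle\mapsto P(0,0,0,1)$. A $q$-order subline of $\mathrm{PG}(1,q^3)$ is the image of $\mathrm{PG}(1,q)=\{\langle(1,t)\rangle:t\in\mathbb F_q\}\cup\{\langle(0,1)\rangle\}$ under an element of $\mathrm{PGL}(2,q^3)$. *)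

(* Defs.v *)
From mathcomp Require Import all_boot all_order all_algebra all_field.
Set Implicit Arguments. Unset Strict Implicit. Unset Printing Implicit Defensive.
Import GRing.Theory.
Local Open Scope ring_scope.

(* F plays the role of F_{q^3}; the subfield F_q is {x | x^q = x}. *)
Definition inFq (F : fieldType) (q : nat) (x : F) : bool := x ^+ q == x.

Definition vecU1 (F : fieldType) (q : nat) (a b c d : F) : 'rV[F]_8 :=
  \row_(i < 8) nth 0 [:: a; b ^+ (q ^ 2)%N; b ^+ q; c; b; c ^+ q; c ^+ (q ^ 2)%N; d] i.

Definition inU1 (F : fieldType) (q : nat) (v : 'rV[F]_8) : Prop :=
  exists a b c d : F, [/\ inFq q a, inFq q d & v = vecU1 q a b c d].

Definition same_point (F : fieldType) (q : nat) (u v : 'rV[F]_8) : Prop :=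
  exists l : F, [/\ inFq q l, l != 0 & u = l *: v].

(* a representative vector of theta(<x>) for a nonzero x in F^2:
   <(x1,x2)> = <(1, x2/x1)> if x1 <> 0, and <(0,1)> otherwise. *)
Definition theta_vec (F : fieldType) (q : nat) (x : F * F) : 'rV[F]_8 :=
  if x.1 == 0 then vecU1 q 0 0 0 1
  else let t := x.2 / x.1 in
       vecU1 q 1 t (t ^+ (q ^ 2 + q)%N) (t ^+ (q ^ 2 + q + 1)%N).

Definition in_O1 (F : fieldType) (q : nat) (u : 'rV[F]_8) : Prop :=
  exists x : F * F, x != (0, 0) /\ same_point q u (theta_vec q x).

Definition Fq_indep4 (F : fieldType) (q : nat) (v0 v1 v2 v3 : 'rV[F]_8) : Prop :=
  forall a0 a1 a2 a3 : F, inFq q a0 -> inFq q a1 -> inFq q a2 -> inFq q a3 ->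
    a0 *: v0 + a1 *: v1 + a2 *: v2 + a3 *: v3 = 0 ->
    [/\ a0 = 0, a1 = 0, a2 = 0 & a3 = 0].

Definition cubic_vec (F : fieldType) (v0 v1 v2 v3 : 'rV[F]_8) (s t : F) : 'rV[F]_8 :=
  s ^+ 3 *: v0 + (s ^+ 2 * t) *: v1 + (s * t ^+ 2) *: v2 + t ^+ 3 *: v3.

(* A twisted cubic of PG(U_1): image of the standard one
   {<(s^3, s^2 t, s t^2, t^3)> : (s,t) in F_q^2 \ 0} under the F_q-linear map
   e_i |-> v_i, with v_0..v_3 in U_1 linearly independent over F_q
   (i.e. a normal rational curve spanning a solid of PG(U_1)). *)
Definition twisted_cubic_basis (F : fieldType) (q : nat) (v0 v1 v2 v3 : 'rV[F]_8) : Prop :=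
  [/\ inU1 q v0, inU1 q v1, inU1 q v2, inU1 q v3 & Fq_indep4 q v0 v1 v2 v3].

Definition on_cubic (F : fieldType) (q : nat) (v0 v1 v2 v3 : 'rV[F]_8) (u : 'rV[F]_8) : Prop :=
  exists s t : F, [/\ inFq q s, inFq q t, (s, t) != (0, 0)
                    & same_point q u (cubic_vec v0 v1 v2 v3 s t)].

(* image of <(s,t)> under the element of PGL(2,q^3) given by M (row convention) *)
Definition mob (F : fieldType) (M : 'M[F]_2) (s t : F) : F * F :=
  (s * M ord0 ord0 + t * M ord_max ord0, s * M ord0 ord_max + t * M ord_max ord_max).

(* u spans a point of theta(L), L the q-order subline given by M *)
Definition on_theta_subline (F : fieldType) (q : nat) (M : 'M[F]_2) (u : 'rV[F]_8) : Prop :=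
  exists s t : F, [/\ inFq q s, inFq q t, (s, t) != (0, 0)
                    & same_point q u (theta_vec q (mob M s t))].

(* Main.v *)
Require Import Defs.
From mathcomp Require Import all_boot all_order all_algebra all_field.
From mathcomp Require Import ring zify.
From mathcomp Require cyclic.
Set Implicit Arguments. Unset Strict Implicit. Unset Printing Implicit Defensive.
Import GRing.Theory.
Local Open Scope ring_scope.

Section Frob.
Variables (F : finFieldType) (q : nat).
Hypothesis hq : exists p k : nat, [/\ prime p, (0 < k)%N & q = (p ^ k)%N].
Hypothesis hF : #|F| = (q ^ 3)%N.

Definition fr (x : F) := x ^+ q.

Lemma q_gt0 : (0 < q)%N.
Proof. by case: hq => p [k] [pp _ ->]; rewrite expn_gt0 prime_gt0. Qed.

Lemma frD x y : fr (x + y) = fr x + fr y.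
Proof.
case: hq => p [k] [pp k0 qE]; rewrite /fr.
have cp : p \in [pchar F].
  apply: (@card_finPcharP _ p (k * 3)) => //; by rewrite hF qE expnM.
apply: exprDn_pchar; rewrite qE.
by rewrite (eq_pnat _ (pcharf_eq cp)) pnatX pnat_id.
Qed.
Lemma frM x y : fr (x * y) = fr x * fr y. Proof. exact: exprMn. Qed.
Lemma fr1 : fr 1 = 1. Proof. exact: expr1n. Qed.
Lemma fr0 : fr 0 = 0. Proof. by rewrite /fr expr0n eqn0Ngt q_gt0. Qed.
Lemma frN x : fr (- x) = - fr x.
Proof. by apply/eqP; rewrite -subr_eq0 opprK -frD addNr fr0. Qed.
Lemma frB x y : fr (x - y) = fr x - fr y. Proof. by rewrite frD frN. Qed.
Lemma frV x : fr (x^-1) = (fr x)^-1. Proof. exact: exprVn. Qed.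
Lemma frf x : fr (x / x) = fr x / fr x. Proof. by rewrite frM frV. Qed.
Lemma fr3 x : fr (fr (fr x)) = x.
Proof.
rewrite /fr -!exprM. idtac.
have -> : (q * (q * q))%N = #|F| by rewrite hF !expnS expn0 muln1.
exact: expf_card.
Qed.
Lemma fr_eq0 x : (fr x == 0) = (x == 0).
Proof. by rewrite /fr expf_eq0 q_gt0. Qed.
Lemma fr_inj : injective fr.
Proof. by move=> x y h; rewrite -(fr3 x) -(fr3 y) h. Qed.

Definition N (x : F) := x * fr x * fr (fr x).

Definition vU (a b c d : F) : 'rV[F]_8 :=
  \row_(i < 8) nth 0 [:: a; fr (fr b); fr b; c; b; fr c; fr (fr c); d] i.

Lemma vecU1E a b c d : vecU1 q a b c d = vU a b c d.
Proof.
have e2 x : x ^+ (q ^ 2)%N = fr (fr x) by rewrite /fr -exprM expnS expn1.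
by rewrite /vecU1 /vU !e2.
Qed.

Definition thh (x y : F) := vU (N x) (fr x * fr (fr x) * y) (x * fr y * fr (fr y)) (N y).

Definition e (M : 'M[F]_2) (a b : bool) :=
  M (if a then ord_max else ord0) (if b then ord_max else ord0).
Definition b0 (i : 'I_8) := odd i.
Definition b1 (i : 'I_8) := odd i./2.
Definition b2 (i : 'I_8) := odd i./2./2.
Definition Kmx (M : 'M[F]_2) : 'M[F]_8 :=
  \matrix_(i, j) (e M (b2 i) (b2 j) * fr (e M (b1 i) (b1 j)) * fr (fr (e M (b0 i) (b0 j)))).

Lemma sum8 (f : 'I_8 -> F) : \sum_(i < 8) f i =
  f (@Ordinal 8 0 isT) + f (@Ordinal 8 1 isT) + f (@Ordinal 8 2 isT) + f (@Ordinal 8 3 isT) +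
  f (@Ordinal 8 4 isT) + f (@Ordinal 8 5 isT) + f (@Ordinal 8 6 isT) + f (@Ordinal 8 7 isT).
Proof.
rewrite !big_ord_recl big_ord0 addr0 !addrA.
repeat congr (_ + _); try (congr f); apply: val_inj; reflexivity.
Qed.

Lemma thhK M x y : thh x y *m Kmx M = thh (mob M x y).1 (mob M x y).2.
Proof.
apply/rowP => j; rewrite !mxE sum8 !mxE /=.
rewrite /mob /e /=.
case: j => [[|[|[|[|[|[|[|[|j]]]]]]]] Hj] //=.
all: rewrite /N ?(frD, frM, fr3); ring.
Qed.
Lemma sum2 (f : 'I_2 -> F) : \sum_(i < 2) f i = f ord0 + f ord_max.
Proof. by rewrite big_ord_recl big_ord1; congr (_ + f _); apply: val_inj. Qed.

Lemma e_mul M M' a b : e (M *m M') a b = e M a false * e M' false b + e M a true * e M' true b.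
Proof. by rewrite /e mxE sum2. Qed.

Lemma KmxM M M' : Kmx M *m Kmx M' = Kmx (M *m M').
Proof.
apply/matrixP => i j; rewrite !mxE sum8 !mxE /b0 /b1 /b2 /= !e_mul.
rewrite ?(frD, frM, fr3); ring.
Qed.

Lemma e1 a b : e 1 a b = (a == b)%:R.
Proof. by case: a; case: b; rewrite /e mxE. Qed.

Lemma Kmx1 : Kmx 1 = 1.
Proof.
apply/matrixP => i j; rewrite !mxE !e1 /b0 /b1 /b2.
case: i => [[|[|[|[|[|[|[|[|i]]]]]]]] Hi] //;
case: j => [[|[|[|[|[|[|[|[|j]]]]]]]] Hj] //=;
rewrite ?fr0 ?fr1 ?mulr1 ?mulr0 ?mul0r //.
Qed.

End Frob.

Section Geo.
Variables (F : finFieldType) (q : nat).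
Hypothesis hq : exists p k : nat, [/\ prime p, (0 < k)%N & q = (p ^ k)%N].
Hypothesis hF : #|F| = (q ^ 3)%N.

Local Notation fr := (fr q).
Local Notation vU := (vU q).
Local Notation N := (N q).
Local Notation Kmx := (Kmx q).
Local Notation thh := (thh q).
Local Notation P := (theta_vec q).
Local Notation sp := (same_point q).
Let frD := frD hq hF.
Let frM := @frM F q.
Let fr1 := @fr1 F q.
Let fr0 := @fr0 F q hq.
Let frN := frN hq hF.
Let frB := frB hq hF.
Let frV := @frV F q.
Let fr3 := fr3 hF.
Let fr_eq0 := @fr_eq0 F q hq.

Definition fq (x : F) := fr x == x.

Lemma fqD x y : fq x -> fq y -> fq (x + y).
Proof. by rewrite /fq frD => /eqP -> /eqP ->. Qed.
Lemma fqM x y : fq x -> fq y -> fq (x * y).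
Proof. by rewrite /fq frM => /eqP -> /eqP ->. Qed.
Lemma fqN x : fq x -> fq (- x).
Proof. by rewrite /fq frN => /eqP ->. Qed.
Lemma fqB x y : fq x -> fq y -> fq (x - y).
Proof. by move=> hx hy; apply: fqD => //; apply: fqN. Qed.
Lemma fqV x : fq x -> fq (x^-1).
Proof. by rewrite /fq frV => /eqP ->. Qed.
Lemma fqMV x y : fq x -> fq y -> fq (x / y).
Proof. by move=> hx hy; apply: fqM => //; apply: fqV. Qed.
Lemma fq0 : fq 0. Proof. by rewrite /fq fr0. Qed.
Lemma fq1 : fq 1. Proof. by rewrite /fq fr1. Qed.
Lemma fqX x n : fq x -> fq (x ^+ n).
Proof. by move=> hx; elim: n => [|n IH]; rewrite ?expr0 ?fq1 // exprS fqM. Qed.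
Lemma fqE x : fq x -> fr x = x. Proof. by move/eqP. Qed.
Lemma fqN_ x : fq (N x).
Proof. by rewrite /fq /N !frM fr3; apply/eqP; ring. Qed.

Lemma vU_scale (l a b c d : F) : fq l -> l *: vU a b c d = vU (l * a) (l * b) (l * c) (l * d).
Proof.
move=> /eqP hl; apply/rowP => i; rewrite !mxE.
case: i => [[|[|[|[|[|[|[|[|i]]]]]]]] Hi] //=; rewrite ?frM ?hl //.
Qed.

Lemma vU_add (a b c d a' b' c' d' : F) :
  vU a b c d + vU a' b' c' d' = vU (a + a') (b + b') (c + c') (d + d').
Proof.
apply/rowP => i; rewrite !mxE.
case: i => [[|[|[|[|[|[|[|[|i]]]]]]]] Hi] //=; rewrite ?frD //.
Qed.

Lemma vU_inj (a b c d a' b' c' d' : F) : vU a b c d = vU a' b' c' d' ->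
  [/\ a = a', b = b', c = c' & d = d'].
Proof.
move=> h.
have g (k : 'I_8) : vU a b c d ord0 k = vU a' b' c' d' ord0 k by rewrite h.
move: (g (@Ordinal 8 0 isT)) (g (@Ordinal 8 4 isT)) (g (@Ordinal 8 3 isT)) (g (@Ordinal 8 7 isT)).
by rewrite !mxE /=.
Qed.

Lemma sp_refl (u : 'rV[F]_8) : sp u u.
Proof. by exists 1; split; rewrite ?scale1r ?oner_eq0 //; exact: fq1. Qed.

Lemma sp_sym (u v : 'rV[F]_8) : sp u v -> sp v u.
Proof.
case=> l [hl l0 ->]; exists l^-1; split; rewrite ?invr_eq0 //; first exact: fqV.
by rewrite scalerA mulVf ?scale1r.
Qed.

Lemma sp_trans (u v w : 'rV[F]_8) : sp u v -> sp v w -> sp u w.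
Proof.
case=> l [hl l0 ->]; case=> l' [hl' l0' ->]; exists (l * l'); split.
- exact: fqM.
- by rewrite mulf_neq0.
- by rewrite scalerA.
Qed.

Lemma sp_K (u v : 'rV[F]_8) (M : 'M[F]_8) : sp u v -> sp (u *m M) (v *m M).
Proof. by case=> l [hl l0 ->]; exists l; split; rewrite // scalemxAl. Qed.

Lemma sp_scale (u : 'rV[F]_8) (l : F) : fq l -> l != 0 -> sp (l *: u) u.
Proof. by move=> hl l0; exists l. Qed.

Definition pt (t : F) := vU 1 t (fr t * fr (fr t)) (N t).

Lemma thvE (x : F * F) : P x = if x.1 == 0 then vU 0 0 0 1 else pt (x.2 / x.1).
Proof.
rewrite /theta_vec !vecU1E /pt /N /fr.
case: ifP => // _; congr vU.
  by rewrite exprD -exprM expnS expn1 mulrC.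
by rewrite !exprD -exprM expnS expn1 expr1; ring.
Qed.

Lemma P_scale (k x y : F) : k != 0 -> P (k * x, k * y) = P (x, y).
Proof.
move=> k0; rewrite !thvE /= mulf_eq0 (negbTE k0) /=.
by case: ifP => // _; rewrite invfM mulrACA mulfV // mul1r.
Qed.

Lemma thh_P (x y : F) : (x, y) != (0, 0) -> sp (thh x y) (P (x, y)).
Proof.
move=> nz; rewrite thvE /=; case: ifP => [/eqP x0|x0].
  have y0 : y != 0 by apply: contra nz => /eqP ->; rewrite x0.
  apply: (@sp_trans _ (N y *: vU 0 0 0 1)); last first.
    apply: sp_scale; first exact: fqN_.
    by rewrite /N !mulf_neq0 ?fr_eq0.
  rewrite vU_scale ?fqN_ // x0 /thh /N !fr0 !mulr0 !mul0r !mulr1; exact: sp_refl.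
have x0' : x != 0 by rewrite x0.
apply: (@sp_trans _ (N x *: pt (y / x))); last first.
  apply: sp_scale; first exact: fqN_.
  by rewrite /N !mulf_neq0 ?fr_eq0.
rewrite /pt vU_scale ?fqN_ // /thh /N !frM !frV ?fr3.
have f1 : fr x != 0 by rewrite fr_eq0.
have f2 : fr (fr x) != 0 by rewrite !fr_eq0.
have -> : x * fr x * fr (fr x) * (y / x) = fr x * fr (fr x) * y by field.
have -> : x * fr x * fr (fr x) * (fr y / fr x * (fr (fr y) / fr (fr x))) = x * fr y * fr (fr y) by field; rewrite ?f1 ?f2 ?x0'.
have -> : x * fr x * fr (fr x) * (y / x * (fr y / fr x) * (fr (fr y) / fr (fr x))) = y * fr y * fr (fr y) by field; rewrite ?f1 ?f2 ?x0'.
rewrite mulr1; exact: sp_refl.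
Qed.


Lemma mob_comp (M M' : 'M[F]_2) (s t : F) :
  mob M' (mob M s t).1 (mob M s t).2 = mob (M *m M') s t.
Proof. by rewrite /mob !mxE !sum2 /=; congr pair; ring. Qed.

Lemma mob1 (s t : F) : mob 1 s t = (s, t).
Proof. by rewrite /mob !mxE /=; congr pair; ring. Qed.

Lemma mob_nz (M : 'M[F]_2) (s t : F) : M \in unitmx -> (s, t) != (0, 0) ->
  (mob M s t) != (0, 0).
Proof.
move=> uM nz; apply: contra nz => /eqP h.
have := mob_comp M (invmx M) s t; rewrite h mulmxV // mob1 => <-.
by rewrite /mob !mul0r !addr0.
Qed.

Lemma keyK (M : 'M[F]_2) (s t : F) : M \in unitmx -> (s, t) != (0, 0) ->
  sp (P (s, t) *m Kmx M) (P (mob M s t)).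
Proof.
move=> uM nz.
apply: (@sp_trans _ (thh s t *m Kmx M)).
  by apply: sp_K; apply: sp_sym; apply: thh_P.
rewrite (thhK hq hF); have := mob_nz uM nz; case: (mob M s t) => x y /= nz'.
exact: thh_P.
Qed.

Definition lin (w0 w1 w2 w3 : 'rV[F]_8) (c0 c1 c2 c3 : F) :=
  c0 *: w0 + c1 *: w1 + c2 *: w2 + c3 *: w3.

Lemma cubicE w0 w1 w2 w3 (s t : F) :
  cubic_vec w0 w1 w2 w3 s t = lin w0 w1 w2 w3 (s ^+ 3) (s ^+ 2 * t) (s * t ^+ 2) (t ^+ 3).
Proof. by []. Qed.

Lemma lin_add w0 w1 w2 w3 (c0 c1 c2 c3 d0 d1 d2 d3 : F) :
  lin w0 w1 w2 w3 c0 c1 c2 c3 + lin w0 w1 w2 w3 d0 d1 d2 d3 =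
  lin w0 w1 w2 w3 (c0 + d0) (c1 + d1) (c2 + d2) (c3 + d3).
Proof.
by apply/rowP => i; rewrite !mxE; ring.
Qed.

Lemma lin_scale w0 w1 w2 w3 (k c0 c1 c2 c3 : F) :
  k *: lin w0 w1 w2 w3 c0 c1 c2 c3 = lin w0 w1 w2 w3 (k * c0) (k * c1) (k * c2) (k * c3).
Proof. by rewrite /lin !scalerDr !scalerA. Qed.

Lemma lin_K w0 w1 w2 w3 (c0 c1 c2 c3 : F) (M : 'M[F]_8) :
  lin w0 w1 w2 w3 c0 c1 c2 c3 *m M = lin (w0 *m M) (w1 *m M) (w2 *m M) (w3 *m M) c0 c1 c2 c3.
Proof. by rewrite /lin !mulmxDl !scalemxAl. Qed.

Lemma lin_indep w0 w1 w2 w3 (c0 c1 c2 c3 d0 d1 d2 d3 : F) :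
  Fq_indep4 q w0 w1 w2 w3 ->
  fq c0 -> fq c1 -> fq c2 -> fq c3 -> fq d0 -> fq d1 -> fq d2 -> fq d3 ->
  lin w0 w1 w2 w3 c0 c1 c2 c3 = lin w0 w1 w2 w3 d0 d1 d2 d3 ->
  [/\ c0 = d0, c1 = d1, c2 = d2 & c3 = d3].
Proof.
move=> hi h0 h1 h2 h3 g0 g1 g2 g3 e.
have := hi (c0 - d0) (c1 - d1) (c2 - d2) (c3 - d3) (fqB h0 g0) (fqB h1 g1) (fqB h2 g2) (fqB h3 g3).
case.
  apply/rowP => i; have := congr1 (fun v : 'rV[F]_8 => v ord0 i) e.
  rewrite /lin !mxE => /eqP; rewrite -subr_eq0 => /eqP ee.
  by rewrite -[RHS]ee; ring.
by move=> /eqP; rewrite subr_eq0 => /eqP -> /eqP; rewrite subr_eq0 => /eqP -> /eqP;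
   rewrite subr_eq0 => /eqP -> /eqP; rewrite subr_eq0 => /eqP ->.
Qed.


Lemma indep3 (a b c t : F) : fq a -> fq b -> fq c -> ~~ fq t ->
  a + b * (fr t + fr (fr t)) + c * (fr t * fr (fr t)) = 0 ->
  [/\ a = 0, b = 0 & c = 0].
Proof.
move=> ha hb hc ht e0.
have e1 : a + b * (fr (fr t) + t) + c * (fr (fr t) * t) = 0.
  by have := congr1 fr e0; rewrite !(frD, frM) fr3 fr0 (fqE ha) (fqE hb) (fqE hc).
have e2 : (fr t - t) * (b + c * fr (fr t)) = 0.
  by rewrite -[RHS](subrr 0) -{1}e0 -e1; ring.
have ne : fr t - t != 0 by rewrite subr_eq0.
move/eqP: e2; rewrite mulf_eq0 (negbTE ne) /= => /eqP e3.
have c0 : c = 0.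
  apply/eqP; apply: contraNT ht => c0.
  have hY : fq (fr (fr t)).
    have -> : fr (fr t) = - b / c by rewrite -[b](addrK (c * fr (fr t))) e3; field.
    by apply: fqMV => //; apply: fqN.
  have tY : t = fr (fr t) by rewrite -{1}(fr3 t) (fqE hY).
  by rewrite /fq {1}tY fr3.
have b0 : b = 0 by move: e3; rewrite c0 mul0r addr0.
by split => //; move: e0; rewrite b0 c0 !mul0r !addr0.
Qed.

Lemma two_elems : (4 <= q)%N -> exists u0 u1 : F,
  [/\ fq u0, fq u1, u0 != 0, u0 != 1 & [/\ u1 != 0, u1 != 1 & u0 != u1]].
Proof.
move=> q4.
pose n := #|F|.-1.
have n0 : (0 < n)%N by rewrite /n hF !expnS expn0 muln1; nia.
have [g gP] : exists g : F, n.-primitive_root g.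
  have H1 : all n.-unity_root (enum (predC1 (0 : F))).
    apply/allP => x; rewrite mem_enum /= => x0; rewrite unity_rootE.
    have cF : (0 < #|F|)%N by apply/card_gt0P; exists 0.
    have := expf_card x; rewrite /n -{1}(prednK cF) exprS.
    have x0' : x != 0 := x0; move=> e; apply/eqP; apply: (mulfI x0'); by rewrite mulr1.
  have H3 : (n <= size (enum (predC1 (0%R : F))))%N by rewrite -cardE cardC1.
  have /hasP[g _ gp] := cyclic.has_prim_root n0 H1 (enum_uniq _) H3.
  by exists g.
have dv : ((q - 1) %| n)%N.
  rewrite /n hF (_ : (q ^ 3).-1 = (q - 1) * (q ^ 2 + q + 1))%N ?dvdn_mulr //.
  rewrite !expnS expn0 !muln1; nia.
set h := g ^+ (n %/ (q - 1)).
have hP : (q - 1).-primitive_root h by exact: dvdn_prim_root.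
have hq1 : h ^+ (q - 1) = 1 := prim_expr_order hP.
have fh : fq h.
  by rewrite /fq /fr -[q in h ^+ q](subnK (q_gt0 hq)) exprD hq1 mul1r expr1.
have q1 : (3 <= q - 1)%N by rewrite leq_subRL // (leq_trans _ q4).
have neq i j : (i < q - 1)%N -> (j < q - 1)%N -> i != j -> h ^+ i != h ^+ j.
  by move=> hi hj ij; rewrite (eq_prim_root_expr hP) !modn_small.
have h0 : h != 0 by rewrite (prim_root_eq0 hP) -lt0n (leq_trans _ q1).
have l1 : (1 < q - 1)%N by rewrite (leq_trans _ q1).
have l2 : (2 < q - 1)%N by rewrite (leq_trans _ q1).
have l0 : (0 < q - 1)%N by rewrite (leq_trans _ q1).
exists h, (h ^+ 2); split => //; [exact: fqX| |split].
- by have := neq 1%N 0%N; rewrite expr1 expr0; apply.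
- by rewrite expf_neq0.
- by have := neq 2%N 0%N; rewrite expr0; apply.
- by have := neq 1%N 2%N; rewrite expr1; apply.
Qed.

Lemma Pdet (x1 y1 x2 y2 : F) : (x1, y1) != (0, 0) -> (x2, y2) != (0, 0) ->
  x1 * y2 - y1 * x2 = 0 -> P (x1, y1) = P (x2, y2).
Proof.
move=> n1 n2 d; rewrite !thvE /=.
have [x10|x10] := eqVneq x1 0; have [x20|x20] := eqVneq x2 0 => //.
- exfalso; have y10 : y1 != 0 by apply: contra n1 => /eqP ->; rewrite x10.
  by move/eqP: d; rewrite x10 mul0r sub0r oppr_eq0 mulf_eq0 (negbTE y10) (negbTE x20).
- exfalso; have y20 : y2 != 0 by apply: contra n2 => /eqP ->; rewrite x20.
  by move/eqP: d; rewrite x20 mulr0 subr0 mulf_eq0 (negbTE y20) (negbTE x10).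
- congr pt; apply/eqP; rewrite -subr_eq0; apply/eqP.
  rewrite (_ : y1 / x1 - y2 / x2 = - (x1 * y2 - y1 * x2) / (x1 * x2)).
    by rewrite d oppr0 mul0r.
  by field; rewrite x10 x20.
Qed.


Definition std (v : 'rV[F]_8) :=
  exists a b c d, [/\ fq a, fq b, fq c, fq d & v = vU a b c d].

Lemma std_add (u v : 'rV[F]_8) : std u -> std v -> std (u + v).
Proof.
case=> [a [b [c [d [ha hb hc hd ->]]]]] [a' [b' [c' [d' [ha' hb' hc' hd' ->]]]]].
by exists (a + a'), (b + b'), (c + c'), (d + d'); split; rewrite ?vU_add; try apply: fqD.
Qed.

Lemma std_scale (k : F) (v : 'rV[F]_8) : fq k -> std v -> std (k *: v).
Proof.
move=> hk [a [b [c [d [ha hb hc hd ->]]]]].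
by exists (k * a), (k * b), (k * c), (k * d); split; rewrite ?vU_scale //; apply: fqM.
Qed.

Lemma std_pt (t : F) : fq t -> std (pt t).
Proof.
move=> ht; exists 1, t, (fr t * fr (fr t)), (N t); split => //; first exact: fq1.
  by rewrite !(fqE ht); apply: fqM.
exact: fqN_.
Qed.

Lemma std_e3 : std (vU (0 : F) 0 0 1).
Proof. by exists 0, 0, 0, 1; split => //; rewrite ?fq0 ?fq1. Qed.

Lemma P01 : P ((0 : F), (1 : F)) = vU 0 0 0 1.
Proof. by rewrite thvE /= eqxx. Qed.

Lemma P10 : P ((1 : F), (0 : F)) = pt 0.
Proof. by rewrite thvE /= oner_eq0 mul0r. Qed.

Lemma P11 : P ((1 : F), (1 : F)) = pt 1.
Proof. by rewrite thvE /= oner_eq0 divr1. Qed.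

Lemma pt0 : pt (0 : F) = vU 1 0 0 0.
Proof. by rewrite /pt /N !fr0 !mul0r. Qed.

Lemma pt1 : pt (1 : F) = vU 1 1 1 1.
Proof. by rewrite /pt /N !fr1 !mul1r. Qed.

Definition mk2 (a b c d : F) : 'M[F]_2 :=
  \matrix_(i, j) if i == ord0 then (if j == ord0 then a else b) else (if j == ord0 then c else d).

Lemma mk2E a b c d : [/\ mk2 a b c d ord0 ord0 = a, mk2 a b c d ord0 ord_max = b,
  mk2 a b c d ord_max ord0 = c & mk2 a b c d ord_max ord_max = d].
Proof. by rewrite !mxE. Qed.

Lemma mob_mk2 a b c d s t : mob (mk2 a b c d) s t = (s * a + t * c, s * b + t * d).
Proof. by rewrite /mob !mxE. Qed.

Section Main.
Variables (v0 v1 v2 v3 : 'rV[F]_8).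
Hypothesis hind : Fq_indep4 q v0 v1 v2 v3.
Hypothesis hsub : forall u : 'rV[F]_8, on_cubic q v0 v1 v2 v3 u -> in_O1 q u.

Local Notation T := (cubic_vec v0 v1 v2 v3).

Lemma onO1T (s t : F) : fq s -> fq t -> (s, t) != (0, 0) ->
  exists w : F * F, w != (0, 0) /\ sp (T s t) (P w).
Proof.
move=> hs ht nz; apply: hsub; exists s, t; split => //; exact: sp_refl.
Qed.

Lemma distT (u u' : F) : fq u -> fq u' -> u != u' -> ~ sp (T 1 u) (T 1 u').
Proof.
move=> hu hu' uu [l [hl l0 e]].
move: e; rewrite !cubicE lin_scale !expr1n !mul1r !mulr1 => e.
have [] := lin_indep hind fq1 hu (fqX 2 hu) (fqX 3 hu) hl (fqM hl hu')
  (fqM hl (fqX 2 hu')) (fqM hl (fqX 3 hu')) e.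
move=> el eu _ _; move: eu; rewrite -el mul1r => eu.
by move: uu; rewrite eu eqxx.
Qed.

Lemma distT3 (u : F) : fq u -> ~ sp (T 1 u) (T 0 1).
Proof.
move=> hu [l [hl l0 e]].
move: e; rewrite !cubicE lin_scale ?expr1n ?expr0n /= ?mul1r ?mulr1 ?mul0r ?mulr0 => e.
have [] := lin_indep hind fq1 hu (fqX 2 hu) (fqX 3 hu) fq0 fq0 fq0 hl e.
by move=> /eqP; rewrite oner_eq0.
Qed.


Lemma buildM : exists M : 'M[F]_2, [/\ M \in unitmx, sp (T 1 0) (P (mob M 1 0)),
  sp (T 0 1) (P (mob M 0 1)) & sp (T 1 1) (P (mob M 1 1))].
Proof.
have nz10 : ((1 : F), (0 : F)) != (0, 0) by rewrite xpair_eqE oner_eq0.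
have nz01 : ((0 : F), (1 : F)) != (0, 0) by rewrite xpair_eqE oner_eq0 andbF.
have nz11 : ((1 : F), (1 : F)) != (0, 0) by rewrite xpair_eqE oner_eq0.
have [[x1 y1] [n1 s1]] := onO1T fq1 fq0 nz10.
have [[x2 y2] [n2 s2]] := onO1T fq0 fq1 nz01.
have [[x3 y3] [n3 s3]] := onO1T fq1 fq1 nz11.
pose d := x1 * y2 - y1 * x2.
have d0 : d != 0.
  apply/eqP => /(Pdet n1 n2) e; apply: (distT3 fq0).
  by apply: (sp_trans s1); rewrite e; apply: sp_sym.
pose a := (x3 * y2 - y3 * x2) / d.
pose b := (x1 * y3 - y1 * x3) / d.
have a0 : a != 0.
  rewrite mulf_eq0 invr_eq0 (negbTE d0) orbF.
  apply/eqP => /(Pdet n3 n2) e; apply: (distT3 fq1).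
  by apply: (sp_trans s3); rewrite e; apply: sp_sym.
have b0 : b != 0.
  rewrite mulf_eq0 invr_eq0 (negbTE d0) orbF.
  apply/eqP => /(Pdet n1 n3) e; apply: (@distT 0 1 fq0 fq1); first by rewrite eq_sym oner_eq0.
  by apply: (sp_trans s1); rewrite e; apply: sp_sym.
pose M := mk2 (a * x1) (a * y1) (b * x2) (b * y2).
pose D := a * b * d.
have D0 : D != 0 by rewrite /D mulf_neq0 // mulf_neq0.
pose B := mk2 (b * y2 / D) (- (a * y1) / D) (- (b * x2) / D) (a * x1 / D).
exists M; split.
- have [] // := @mulmx1_unit _ _ M B.
  apply/matrixP => i j; rewrite !mxE !sum2 !mxE.
  case: i => [[|[|i]] Hi] //; case: j => [[|[|j]] Hj] //=;
  rewrite /D /d; field; rewrite -/d ?a0 ?b0 ?d0 //.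
- by rewrite /M mob_mk2 !mul1r !mul0r !addr0 P_scale.
- by rewrite /M mob_mk2 !mul1r !mul0r !add0r P_scale.
- rewrite /M mob_mk2 !mul1r.
  have -> : (a * x1 + b * x2, a * y1 + b * y2) = (x3, y3).
    by congr pair; rewrite /a /b /d; field; rewrite -/d.
  exact: s3.
Qed.


Section WithM.
Variable M : 'M[F]_2.
Hypothesis uM : M \in unitmx.
Hypothesis h10 : sp (T 1 0) (P (mob M 1 0)).
Hypothesis h01 : sp (T 0 1) (P (mob M 0 1)).
Hypothesis h11 : sp (T 1 1) (P (mob M 1 1)).

Local Notation Mi := (invmx M).
Definition R (s t : F) := T s t *m Kmx Mi.

Lemma uMi : Mi \in unitmx. Proof. by rewrite unitmx_inv. Qed.

Lemma RE s t : R s t = cubic_vec (v0 *m Kmx Mi) (v1 *m Kmx Mi) (v2 *m Kmx Mi) (v3 *m Kmx Mi) s t.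
Proof. by rewrite /R !cubicE lin_K. Qed.

Lemma TR s t : T s t = R s t *m Kmx M.
Proof. by rewrite /R -mulmxA (KmxM hq hF) mulVmx // (Kmx1 _ hq) mulmx1. Qed.

Lemma sp_RT s t s' t' : sp (R s t) (R s' t') -> sp (T s t) (T s' t').
Proof. by move=> h; rewrite !TR; apply: sp_K. Qed.

Lemma Rnorm s t x y : (x, y) != (0, 0) -> sp (T s t) (P (mob M x y)) -> sp (R s t) (P (x, y)).
Proof.
move=> nz h; have := sp_K (Kmx Mi) h; rewrite -/(R s t) => h'.
apply: (sp_trans h'); have nz' := mob_nz uM nz.
have k := @keyK Mi (mob M x y).1 (mob M x y).2 uMi nz'.
apply: (sp_trans k); rewrite mob_comp mulmxV // mob1; exact: sp_refl.
Qed.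

Lemma R10 : sp (R 1 0) (pt 0).
Proof. by rewrite -P10; apply: Rnorm => //; rewrite xpair_eqE oner_eq0. Qed.
Lemma R01 : sp (R 0 1) (vU 0 0 0 1).
Proof. by rewrite -P01; apply: Rnorm => //; rewrite xpair_eqE oner_eq0 andbF. Qed.
Lemma R11 : sp (R 1 1) (pt 1).
Proof. by rewrite -P11; apply: Rnorm => //; rewrite xpair_eqE oner_eq0. Qed.

Lemma Rpt s t : fq s -> fq t -> (s, t) != (0, 0) ->
  exists z : F * F, z != (0, 0) /\ sp (R s t) (P z).
Proof.
move=> hs ht nz; have [[x y] [nw hw]] := onO1T hs ht nz.
have := sp_K (Kmx Mi) hw; rewrite -/(R s t) => h.
exists (mob Mi x y); split; first exact: mob_nz uMi nw.
exact: (sp_trans h (keyK uMi nw)).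
Qed.

Lemma Rfin u : fq u -> exists l t, [/\ fq l, l != 0 & R 1 u = l *: pt t].
Proof.
move=> hu; have nz1 : ((1 : F), u) != (0, 0) by rewrite xpair_eqE oner_eq0.
have [[x y] [nz h]] := Rpt fq1 hu nz1.
move: h; rewrite thvE /=; case: ifP => _ h.
  exfalso; apply: (distT3 hu); apply: sp_RT; apply: (sp_trans h); exact: sp_sym R01.
by case: h => l [hl l0 e]; exists l, (y / x).
Qed.

Lemma same_pt u u' l l' t : fq u -> fq u' -> fq l -> l != 0 -> fq l' -> l' != 0 ->
  R 1 u = l *: pt t -> R 1 u' = l' *: pt t -> u = u'.
Proof.
move=> hu hu' hl l0 hl' l0' e e'; case: (eqVneq u u') => // uu; exfalso.
apply: (distT hu hu' uu); apply: sp_RT; rewrite e e'.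
apply: (sp_trans (sp_scale _ hl l0)); apply: sp_sym; exact: sp_scale.
Qed.


Section Span.
Variable u0 : F.
Hypotheses (hu0 : fq u0) (u00 : u0 != 0) (u01 : u0 != 1).

Definition c4 (s t : F) := (s * t ^+ 2 - s ^+ 2 * t) / (u0 ^+ 2 - u0).
Definition c3 (s t : F) := s ^+ 2 * t - c4 s t * u0.
Definition c1 (s t : F) := s ^+ 3 - c3 s t - c4 s t.
Definition c2 (s t : F) := t ^+ 3 - c3 s t - c4 s t * u0 ^+ 3.

Lemma den0 : u0 ^+ 2 - u0 != 0.
Proof.
rewrite (_ : u0 ^+ 2 - u0 = u0 * (u0 - 1)); last by ring.
by rewrite mulf_neq0 // subr_eq0.
Qed.

Lemma Rspan s t : R s t = c1 s t *: R 1 0 + c2 s t *: R 0 1 + c3 s t *: R 1 1 + c4 s t *: R 1 u0.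
Proof.
have d0 := den0.
rewrite !RE !cubicE !lin_scale !lin_add /c1 /c2 /c3 /c4; congr lin; field; exact: d0.
Qed.

Lemma fq_c s t : fq s -> fq t -> [/\ fq (c1 s t), fq (c2 s t), fq (c3 s t) & fq (c4 s t)].
Proof.
move=> hs ht.
have h4 : fq (c4 s t) :=
  fqMV (fqB (fqM hs (fqX 2 ht)) (fqM (fqX 2 hs) ht)) (fqB (fqX 2 hu0) hu0).
have h3 : fq (c3 s t) := fqB (fqM (fqX 2 hs) ht) (fqM h4 hu0).
split => //; first exact: fqB (fqB (fqX 3 hs) h3) h4.
exact: fqB (fqB (fqX 3 ht) h3) (fqM h4 (fqX 3 hu0)).
Qed.

End Span.

Lemma core u0 u1 l4 t : fq u0 -> fq u1 -> u0 != 0 -> u0 != 1 -> u1 != 0 -> u1 != 1 -> u0 != u1 ->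
  fq l4 -> l4 != 0 -> R 1 u0 = l4 *: pt t -> fq t.
Proof.
move=> hu0 hu1 n0 n1 m0 m1 m2 hl4 l40 e4.
apply/negPn/negP => nt.
have [l5 [s [hl5 l50 e5]]] := Rfin hu1.
have [l1 [hl1 l10 e1]] := R10.
have [l2 [hl2 l20 e2]] := R01.
have [l3 [hl3 l30 e3]] := R11.
have [f1 f2 f3 f4] := fq_c hu0 fq1 hu1.
have := Rspan n0 n1 1 u1.
rewrite e1 e2 e3 e4 e5 !scalerA pt0 pt1 /pt.
have k1 := fqM f1 hl1; have k2 := fqM f2 hl2; have k3 := fqM f3 hl3; have k4 := fqM f4 hl4.
rewrite !vU_scale // !vU_add => /vU_inj [_ eb ec _].
set g := c3 u0 1 u1 * l3 / l5.
set h := c4 u0 1 u1 * l4 / l5.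
have hg : fq g := fqMV k3 hl5.
have hh : fq h := fqMV k4 hl5.
have es : s = g + h * t.
  by apply: (mulfI l50); rewrite eb /g /h; field.
have fs : fr s = g + h * fr t by rewrite es frD frM (fqE hg) (fqE hh).
have ffs : fr (fr s) = g + h * fr (fr t) by rewrite fs frD frM (fqE hg) (fqE hh).
move/eqP: ec; rewrite -subr_eq0 => /eqP ec0.
have E : l5 * ((g ^+ 2 - g) + g * h * (fr t + fr (fr t)) + (h ^+ 2 - h) * (fr t * fr (fr t))) = 0.
  by rewrite -[RHS]ec0 ffs fs /g /h; field.
move/eqP: E; rewrite mulf_eq0 (negbTE l50) /= => /eqP E.
have [eg egh eh] := indep3 (fqB (fqX 2 hg) hg) (fqM hg hh) (fqB (fqX 2 hh) hh) nt E.
have sq (x : F) : x ^+ 2 - x = 0 -> x = 0 \/ x = 1.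
  move=> /eqP; rewrite (_ : x ^+ 2 - x = x * (x - 1)); last by ring.
  by rewrite mulf_eq0 subr_eq0 => /orP [] /eqP; [left|right].
have [g0|g1] := sq _ eg.
  have [h0|h1] := sq _ eh.
    move: e5; rewrite es g0 h0 mul0r addr0 => e5.
    by move: m0; rewrite (same_pt hu1 fq0 hl5 l50 hl1 l10 e5 e1) eqxx.
  move: e5; rewrite es g0 h1 mul1r add0r => e5.
  by move: m2; rewrite (same_pt hu1 hu0 hl5 l50 hl4 l40 e5 e4) eqxx.
move: egh; rewrite g1 mul1r => h0.
move: e5; rewrite es g1 h0 mul0r addr0 => e5.
by move: m1; rewrite (same_pt hu1 fq1 hl5 l50 hl3 l30 e5 e3) eqxx.
Qed.


Lemma Rstd u0 l4 t s' t' : fq u0 -> u0 != 0 -> u0 != 1 -> fq l4 -> R 1 u0 = l4 *: pt t -> fq t ->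
  fq s' -> fq t' -> std (R s' t').
Proof.
move=> hu0 n0 n1 hl4 e4 ht hs ht'.
have [l1 [hl1 _ e1]] := R10.
have [l2 [hl2 _ e2]] := R01.
have [l3 [hl3 _ e3]] := R11.
have [f1 f2 f3 f4] := fq_c hu0 hs ht'.
rewrite (Rspan n0 n1) e1 e2 e3 e4.
have S1 := std_scale hl1 (std_pt fq0).
have S2 := std_scale hl2 std_e3.
have S3 := std_scale hl3 (std_pt fq1).
have S4 := std_scale hl4 (std_pt ht).
apply: std_add; first apply: std_add; first apply: std_add.
all: apply: std_scale => //.
Qed.

Section Std.
Hypothesis Hstd : forall s t, fq s -> fq t -> std (R s t).

Lemma Rpt2 s t : fq s -> fq t -> (s, t) != (0, 0) ->
  exists z : F * F, [/\ fq z.1, fq z.2, z != (0, 0) & sp (R s t) (P z)].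
Proof.
move=> hs ht nz; have [[x y] [nw h]] := Rpt hs ht nz.
move: h; rewrite thvE /=; case: ifP => _ h.
  exists (0, 1); split; rewrite ?fq0 ?fq1 ?P01 //=.
  by rewrite xpair_eqE oner_eq0 andbF.
set sg := y / x in h.
have [a [b [c [d [ha hb hc hd e]]]]] := Hstd hs ht.
have h' := h; case: h' => l [hl l0 el].
move: el; rewrite e /pt vU_scale // => /vU_inj [ea eb _ _].
have hsg : fq sg.
  have -> : sg = b / a by rewrite eb ea; field.
  exact: fqMV.
exists (1, sg); split; rewrite ?fq1 //=; first by rewrite xpair_eqE oner_eq0.
rewrite thvE /= oner_eq0 /= divr1 -e; exact: h.
Qed.

Lemma forward u : on_cubic q v0 v1 v2 v3 u -> on_theta_subline q M u.
Proof.
case=> s [t [hs ht nz hu]].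
have [[x y] [hx hy nw h]] := Rpt2 hs ht nz.
exists x, y; split => //.
apply: (sp_trans hu); rewrite TR; apply: (sp_trans (sp_K (Kmx M) h)).
exact: keyK uM nw.
Qed.

Lemma Rfin2 u : fq u -> exists l t, [/\ fq l, l != 0, fq t & R 1 u = l *: pt t].
Proof.
move=> hu; have [l [t [hl l0 e]]] := Rfin hu.
exists l, t; split => //.
have [a [b [c [d [ha hb hc hd e']]]]] := Hstd fq1 hu.
move: e'; rewrite e /pt vU_scale // => /vU_inj [ea eb _ _].
have -> : t = b / a by rewrite -eb -ea; field.
exact: fqMV.
Qed.

Definition Fqt := {x : F | fq x}.

Definition phi (o : option Fqt) : option Fqt :=
  if o is Some u then insub (R 1 (val u) ord0 (@Ordinal 8 4 isT) / R 1 (val u) ord0 ord0)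
  else None.

Lemma phiS (u : Fqt) l t (ht : fq t) : fq l -> l != 0 -> R 1 (val u) = l *: pt t ->
  phi (Some u) = Some (exist _ t ht).
Proof.
move=> hl l0 e; rewrite /phi e !mxE /= (_ : l * t / (l * 1) = t); last by field.
exact: insubT.
Qed.

Lemma phi_inj : injective phi.
Proof.
have ex (u : Fqt) : exists l t (ht : fq t), [/\ fq l, l != 0, R 1 (val u) = l *: pt t &
    phi (Some u) = Some (exist _ t ht)].
  have [l [t [hl l0 ht e]]] := Rfin2 (valP u).
  exists l, t, ht; split => //; exact: (phiS _ hl l0 e).
case=> [u|] [u'|] //.
- have [l [t [ht [hl l0 e p]]]] := ex u.
  have [l' [t' [ht' [hl' l0' e' p']]]] := ex u'.
  rewrite p p' => [[tt]]; congr Some; apply: val_inj.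
  move: ht' e' p'; rewrite -tt => ht' e' _.
  exact: (same_pt (valP u) (valP u') hl l0 hl' l0' e e').
- by have [l [t [ht [hl l0 e ->]]]] := ex u.
- by have [l [t [ht [hl l0 e ->]]]] := ex u'.
Qed.

Lemma surj s : fq s -> exists u, fq u /\ sp (R 1 u) (pt s).
Proof.
move=> hs; have [g phig gphi] := injF_bij phi_inj.
case E: (g (Some (exist _ s hs))) => [u|].
  have := gphi (Some (exist _ s hs)); rewrite E.
  have [l [t [hl l0 ht e]]] := Rfin2 (valP u).
  rewrite (phiS ht hl l0 e) => [[ts]].
  exists (val u); split; first exact: valP.
  by rewrite e ts; apply: sp_scale.
by have := gphi (Some (exist _ s hs)); rewrite E.
Qed.

Lemma backward u : on_theta_subline q M u -> on_cubic q v0 v1 v2 v3 u.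
Proof.
case=> s [t [hs ht nz hu]].
have k := sp_sym (keyK uM nz).
have [s0|s0] := eqVneq s 0.
  exists 0, 1; split; [exact: fq0|exact: fq1|by rewrite xpair_eqE oner_eq0 andbF|].
  apply: (sp_trans hu); apply: (sp_trans k); rewrite TR; apply: sp_K.
  by rewrite thvE /= s0 eqxx; apply: sp_sym; exact: R01.
have [u' [hu' e]] := surj (fqMV ht hs).
exists 1, u'; split; [exact: fq1|exact: hu'|by rewrite xpair_eqE oner_eq0|].
apply: (sp_trans hu); apply: (sp_trans k); rewrite TR; apply: sp_K.
by rewrite thvE /= (negbTE s0); apply: sp_sym.
Qed.

End Std.

Lemma final (q4 : (4 <= q)%N) (u : 'rV[F]_8) :
  on_cubic q v0 v1 v2 v3 u <-> on_theta_subline q M u.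
Proof.
have [u0 [u1 [hu0 hu1 n0 n1 [m0 m1 m2]]]] := two_elems q4.
have [l4 [t [hl4 l40 e4]]] := Rfin hu0.
have ht := core hu0 hu1 n0 n1 m0 m1 m2 hl4 l40 e4.
have Hstd s t' : fq s -> fq t' -> std (R s t') := Rstd hu0 n0 n1 hl4 e4 ht.
by split; [apply: (forward Hstd) | apply: (backward Hstd)].
Qed.

End WithM.

Lemma main_final (q4 : (4 <= q)%N) : exists M : 'M[F]_2, M \in unitmx /\
  (forall u : 'rV[F]_8, on_cubic q v0 v1 v2 v3 u <-> on_theta_subline q M u).
Proof.
have [M [uM h10 h01 h11]] := buildM.
by exists M; split => // u; apply: final.
Qed.
End Main.

End Geo.

Unset Implicit Arguments.
Set Strict Implicit.

Theorem mainTheorem4 (F : finFieldType) (q : nat)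
  (hq : exists p k : nat, [/\ prime p, (0 < k)%N & q = (p ^ k)%N])
  (hF : #|F| = (q ^ 3)%N) (hq4 : (4 <= q)%N)
  (v0 v1 v2 v3 : 'rV[F]_8)
  (hcub : twisted_cubic_basis q v0 v1 v2 v3)
  (hsub : forall u : 'rV[F]_8, on_cubic q v0 v1 v2 v3 u -> in_O1 q u) :
  exists M : 'M[F]_2, M \in unitmx /\
    (forall u : 'rV[F]_8, inU1 q u -> u != 0 ->
       (on_cubic q v0 v1 v2 v3 u <-> on_theta_subline q M u)).
Proof.
case: hcub => _ _ _ _ hind.
have [M [uM H]] := main_final hq hF hind hsub hq4.
by exists M; split => // u _ _; apply: H.
Qed.
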